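(* Let $M$ be a simply-connected domain in the Minkowski plane $(\mathbb{R}^2(u,v),du\,dv)$, let $\omega,Q,R:M\to\mathbb{R}$ be smooth functions and $H\in\mathbb{R}$ a constant. (1) Suppose $\Phi=(\Phi_1,\Phi_2):M\to\mathrm{SL}_2\mathbb{R}\times\mathrm{SL}_2\mathbb{R}$ is smooth and satisfies $(\Phi_1)_u=\Phi_1\mathcal U_1$, $(\Phi_1)_v=\Phi_1\mathcal V_1$, $(\Phi_2)_u=\Phi_2\mathcal U_2$, $(\Phi_2)_v=\Phi_2\mathcal V_2$, where $$\mathcal U_1=\begin{pmatrix}\frac{\omega_u}{4}&\frac12e^{\omega/2}(H+1)\\-e^{-\omega/2}Q&-\frac{\omega_u}{4}\end{pmatrix},\ \mathcal V_1=\begin{pmatrix}-\frac{\omega_v}{4}&e^{-\omega/2}R\\-\frac12e^{\omega/2}(H-1)&\frac{\omega_v}{4}\end{pmatrix},$$ $$\mathcal U_2=\begin{pmatrix}-\frac{\omega_u}{4}&e^{-\omega/2}Q\\-\frac12e^{\omega/2}(H-1)&\frac{\omega_u}{4}\end{pmatrix},\ \mathcal V_2=\begin{pmatrix}\frac{\omega_v}{4}&\frac12e^{\omega/2}(H+1)\\-e^{-\omega/2}R&-\frac{\omega_v}{4}\end{pmatrix}.$$ Then $\varphi:=\Phi_1\Phi_2^t:M\to\mathbb{H}^3_1(-1)$ is a conformal timelike immersion with induced metric $e^{\omega}du\,dv$ and constant mean curvature $H$ (with respect to the unit normal $N=\Phi_1\mathbf k'\Phi_2^t$). (2) Suppose $\Psi=(\Psi_1,\Psi_2):M\to\mathrm{SL}_2\mathbb{R}\times\mathrm{SL}_2\mathbb{R}$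 is smooth and satisfies $(\Psi_1)_u=\Psi_1\mathcal U_1$, $(\Psi_1)_v=\Psi_1\mathcal V_1$, $(\Psi_2)_u=\Psi_2\mathcal U_2'$, $(\Psi_2)_v=\Psi_2\mathcal V_2'$, with $\mathcal U_1,\mathcal V_1$ as in (1) and $$\mathcal U_2'=\begin{pmatrix}\frac{\omega_u}{4}&\frac12e^{\omega/2}(H-1)\\-e^{-\omega/2}Q&-\frac{\omega_u}{4}\end{pmatrix},\ \mathcal V_2'=\begin{pmatrix}-\frac{\omega_v}{4}&e^{-\omega/2}R\\-\frac12e^{\omega/2}(H+1)&\frac{\omega_v}{4}\end{pmatrix}.$$ Then $\psi:=\Psi_1\Psi_2^{-1}:M\to\mathbb{H}^3_1(-1)$ is a conformal timelike immersion with induced metric $e^{\omega}du\,dv$ and constant mean curvature $H$ (with respect to the unit normal $N=\Psi_1\mathbf k'\Psi_2^{-1}$).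
   Context: $\mathbb{E}^4_2$ is $\mathbb{R}^4$ with metric $-(dx_0)^2-(dx_1)^2+(dx_2)^2+(dx_3)^2$, identified with $M_2(\mathbb{R})$ via $(x_0,x_1,x_2,x_3)\mapsto \begin{pmatrix}x_0+x_3& x_1+x_2\\ -x_1+x_2 & x_0-x_3\end{pmatrix}$, so that $\langle u,v\rangle=\tfrac12\{\operatorname{tr}(uv)-\operatorname{tr}u\operatorname{tr}v\}$, $\langle u,u\rangle=-\det u$, and anti-de Sitter space $\mathbb{H}^3_1(-1)=\{\langle x,x\rangle=-1\}$ becomes $\mathrm{SL}_2\mathbb{R}$. $\mathbf k'=\begin{pmatrix}1&0\\0&-1\end{pmatrix}$. For an immersion $\varphi$ of a domain with null coordinates $(u,v)$, conformal timelike means $\langle\varphi_u,\varphi_u\rangle=\langle\varphi_v,\varphi_v\rangle=0$, $\langle\varphi_u,\varphi_v\rangle=\tfrac12e^{\omega}$ (metric $e^\omega du\,dv$); for a unit normal $N$ ($\langle N,N\rangle=1$, $N\perp\varphi,\varphi_u,\varphi_v$) the mean curvature is $H=2e^{-\omega}\langle\varphi_{uv},N\rangle$. *)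

(* Defs.v *)
From Stdlib Require Import Reals.
From Coquelicot Require Import Coquelicot.
Open Scope R_scope.

Record mat2 := M2 { m11 : R; m12 : R; m21 : R; m22 : R }.

Definition mmul (a b : mat2) : mat2 :=
  M2 (m11 a * m11 b + m12 a * m21 b) (m11 a * m12 b + m12 a * m22 b)
     (m21 a * m11 b + m22 a * m21 b) (m21 a * m12 b + m22 a * m22 b).
Definition mtr (a : mat2) : mat2 := M2 (m11 a) (m21 a) (m12 a) (m22 a).
Definition mdet (a : mat2) : R := m11 a * m22 a - m12 a * m21 a.
Definition mtrace (a : mat2) : R := m11 a + m22 a.
Definition minv (a : mat2) : mat2 :=
  M2 (m22 a / mdet a) (- m12 a / mdet a) (- m21 a / mdet a) (m11 a / mdet a).
Definition madd (a b : mat2) : mat2 :=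
  M2 (m11 a + m11 b) (m12 a + m12 b) (m21 a + m21 b) (m22 a + m22 b).
Definition mscal (c : R) (a : mat2) : mat2 :=
  M2 (c * m11 a) (c * m12 a) (c * m21 a) (c * m22 a).
Definition mzero : mat2 := M2 0 0 0 0.

(* the metric of E^4_2 transported to M_2(R): <u,v> = 1/2 (tr(uv) - tr u tr v) *)
Definition inner (a b : mat2) : R :=
  / 2 * (mtrace (mmul a b) - mtrace a * mtrace b).

Definition kprime : mat2 := M2 1 0 0 (-1).

Definition connected_set (M : R * R -> Prop) : Prop :=
  forall U V : R * R -> Prop, open U -> open V ->
    (forall p, M p -> U p \/ V p) ->
    (exists p, M p /\ U p) -> (exists p, M p /\ V p) ->
    exists p, M p /\ U p /\ V p.

Definition simply_connected_set (M : R * R -> Prop) : Prop :=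
  forall g : R -> R * R,
    (forall s, continuous g s) ->
    (forall s, 0 <= s <= 1 -> M (g s)) ->
    g 0 = g 1 ->
    exists h : R * R -> R * R,
      (forall p, continuous h p) /\
      (forall s t, 0 <= s <= 1 -> 0 <= t <= 1 -> M (h (s, t))) /\
      (forall s, 0 <= s <= 1 -> h (s, 0) = g s) /\
      (forall s, 0 <= s <= 1 -> h (s, 1) = g 0) /\
      (forall t, 0 <= t <= 1 -> h (0, t) = g 0 /\ h (1, t) = g 0).

Definition simply_connected_domain (M : R * R -> Prop) : Prop :=
  open M /\ (exists p, M p) /\ connected_set M /\ simply_connected_set M.

Definition pu (f : R -> R -> R) : R -> R -> R := fun u v => Derive (fun t => f t v) u.
Definition pv (f : R -> R -> R) : R -> R -> R := fun u v => Derive (fun t => f u t) v.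

Definition C0 (M : R * R -> Prop) (f : R -> R -> R) : Prop :=
  forall u v, M (u, v) -> continuous (fun p : R * R => f (fst p) (snd p)) (u, v).

Fixpoint Cn (n : nat) (M : R * R -> Prop) (f : R -> R -> R) : Prop :=
  match n with
  | O => C0 M f
  | S k => C0 M f /\
           (forall u v, M (u, v) -> ex_derive (fun t => f t v) u /\ ex_derive (fun t => f u t) v) /\
           Cn k M (pu f) /\ Cn k M (pv f)
  end.

Definition smooth_on (M : R * R -> Prop) (f : R -> R -> R) : Prop := forall n, Cn n M f.

Definition smooth_mat_on (M : R * R -> Prop) (F : R -> R -> mat2) : Prop :=
  smooth_on M (fun u v => m11 (F u v)) /\ smooth_on M (fun u v => m12 (F u v)) /\
  smooth_on M (fun u v => m21 (F u v)) /\ smooth_on M (fun u v => m22 (F u v)).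

Definition mpu (F : R -> R -> mat2) : R -> R -> mat2 := fun u v =>
  M2 (pu (fun a b => m11 (F a b)) u v) (pu (fun a b => m12 (F a b)) u v)
     (pu (fun a b => m21 (F a b)) u v) (pu (fun a b => m22 (F a b)) u v).
Definition mpv (F : R -> R -> mat2) : R -> R -> mat2 := fun u v =>
  M2 (pv (fun a b => m11 (F a b)) u v) (pv (fun a b => m12 (F a b)) u v)
     (pv (fun a b => m21 (F a b)) u v) (pv (fun a b => m22 (F a b)) u v).

Definition into_SL2 (M : R * R -> Prop) (F : R -> R -> mat2) : Prop :=
  forall u v, M (u, v) -> mdet (F u v) = 1.

Section Coeffs.
Variables (om Q Rr : R -> R -> R) (H : R).
Definition U1 u v : mat2 :=
  M2 (pu om u v / 4) (/ 2 * exp (om u v / 2) * (H + 1))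
     (- exp (- om u v / 2) * Q u v) (- (pu om u v / 4)).
Definition V1 u v : mat2 :=
  M2 (- (pv om u v / 4)) (exp (- om u v / 2) * Rr u v)
     (- (/ 2 * exp (om u v / 2) * (H - 1))) (pv om u v / 4).
Definition U2 u v : mat2 :=
  M2 (- (pu om u v / 4)) (exp (- om u v / 2) * Q u v)
     (- (/ 2 * exp (om u v / 2) * (H - 1))) (pu om u v / 4).
Definition V2 u v : mat2 :=
  M2 (pv om u v / 4) (/ 2 * exp (om u v / 2) * (H + 1))
     (- exp (- om u v / 2) * Rr u v) (- (pv om u v / 4)).
Definition U2' u v : mat2 :=
  M2 (pu om u v / 4) (/ 2 * exp (om u v / 2) * (H - 1))
     (- exp (- om u v / 2) * Q u v) (- (pu om u v / 4)).
Definition V2' u v : mat2 :=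
  M2 (- (pv om u v / 4)) (exp (- om u v / 2) * Rr u v)
     (- (/ 2 * exp (om u v / 2) * (H + 1))) (pv om u v / 4).
End Coeffs.

Definition conformal_timelike_CMC_immersion (M : R * R -> Prop)
    (phi : R -> R -> mat2) (om : R -> R -> R) (H : R) (N : R -> R -> mat2) : Prop :=
  smooth_mat_on M phi /\ smooth_mat_on M N /\
  forall u v, M (u, v) ->
    let pu_ := mpu phi u v in
    let pv_ := mpv phi u v in
    inner (phi u v) (phi u v) = -1 /\
    (forall a b : R, madd (mscal a pu_) (mscal b pv_) = mzero -> a = 0 /\ b = 0) /\
    (* conformal timelike with metric e^om du dv *)
    inner pu_ pu_ = 0 /\ inner pv_ pv_ = 0 /\ inner pu_ pv_ = / 2 * exp (om u v) /\
    inner (N u v) (N u v) = 1 /\ inner (N u v) (phi u v) = 0 /\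
    inner (N u v) pu_ = 0 /\ inner (N u v) pv_ = 0 /\
    2 * exp (- om u v) * inner (mpv (mpu phi) u v) (N u v) = H.

(* Main.v *)
Require Import Defs.
From Stdlib Require Import Reals Lra FunctionalExtensionality.
From Coquelicot Require Import Coquelicot.
Open Scope R_scope.

Section Loc.
Variable M : R * R -> Prop.
Hypothesis HM : open M.

Lemma loc_u u v : M (u, v) -> locally u (fun t => M (t, v)).
Proof.
  intros H. destruct (HM _ H) as [e He]. exists e. intros y Hy.
  apply He. split; [exact Hy| apply ball_center].
Qed.

Lemma loc_v u v : M (u, v) -> locally v (fun t => M (u, t)).
Proof.
  intros H. destruct (HM _ H) as [e He]. exists e. intros y Hy.
  apply He. split; [apply ball_center | exact Hy].
Qed.

Lemma loc_imp {T : UniformSpace} (x : T) (P Q : T -> Prop) :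
  locally x P -> (forall y, P y -> Q y) -> locally x Q.
Proof. intros [e He] HPQ. exists e. intros y Hy. apply HPQ, He, Hy. Qed.

Lemma Cn_ext_loc n : forall f g : R -> R -> R,
  (forall u v, M (u, v) -> f u v = g u v) -> Cn n M f -> Cn n M g.
Proof.
  induction n as [|n IH]; intros f g Hfg Hf.
  - intros u v Huv. simpl in Hf.
    apply (continuous_ext_loc _ (fun p : R * R => f (fst p) (snd p))).
    + apply (loc_imp _ _ _ (HM _ Huv)). intros [a b] Hab. simpl. now apply Hfg.
    + now apply Hf.
  - destruct Hf as [H0 [H1 [H2 H3]]]. split; [|split; [|split]].
    + intros u v Huv.
      apply (continuous_ext_loc _ (fun p : R * R => f (fst p) (snd p))).
      * apply (loc_imp _ _ _ (HM _ Huv)). intros [a b] Hab. simpl. now apply Hfg.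
      * now apply H0.
    + intros u v Huv. destruct (H1 u v Huv) as [Da Db]. split.
      * apply (ex_derive_ext_loc (fun t => f t v)); [|exact Da].
        apply (loc_imp _ _ _ (loc_u _ _ Huv)). intros; now apply Hfg.
      * apply (ex_derive_ext_loc (fun t => f u t)); [|exact Db].
        apply (loc_imp _ _ _ (loc_v _ _ Huv)). intros; now apply Hfg.
    + apply (IH (pu f)); [|exact H2]. intros u v Huv. unfold pu.
      apply Derive_ext_loc. apply (loc_imp _ _ _ (loc_u _ _ Huv)). intros; now apply Hfg.
    + apply (IH (pv f)); [|exact H3]. intros u v Huv. unfold pv.
      apply Derive_ext_loc. apply (loc_imp _ _ _ (loc_v _ _ Huv)). intros; now apply Hfg.
Qed.

Lemma smooth_ext_loc f g : (forall u v, M (u, v) -> f u v = g u v) -> smooth_on M f -> smooth_on M g.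
Proof. intros H Hf n. exact (Cn_ext_loc n f g H (Hf n)). Qed.

Lemma mpu_ext_loc (F G : R -> R -> mat2) u v :
  (forall a b, M (a, b) -> F a b = G a b) -> M (u, v) -> mpu F u v = mpu G u v.
Proof.
  intros H Huv. unfold mpu, pu. f_equal; apply Derive_ext_loc;
  apply (loc_imp _ _ _ (loc_u _ _ Huv)); intros; now rewrite H.
Qed.

Lemma mpv_ext_loc (F G : R -> R -> mat2) u v :
  (forall a b, M (a, b) -> F a b = G a b) -> M (u, v) -> mpv F u v = mpv G u v.
Proof.
  intros H Huv. unfold mpv, pv. f_equal; apply Derive_ext_loc;
  apply (loc_imp _ _ _ (loc_v _ _ Huv)); intros; now rewrite H.
Qed.
End Loc.

Lemma Cn_S n M f : Cn (S n) M f -> Cn n M f.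
Proof.
  revert f; induction n as [|n IH]; intros f Hf.
  - exact (proj1 Hf).
  - destruct Hf as [H0 [H1 [H2 H3]]]. split; [exact H0|split; [exact H1|split]].
    + apply IH, H2.
    + apply IH, H3.
Qed.

Lemma Cn_const n M c : Cn n M (fun _ _ => c).
Proof.
  induction n as [|n IH].
  - intros u v _. apply continuous_const.
  - split; [intros u v _; apply continuous_const|split].
    + intros; split; apply ex_derive_const.
    + assert (E : forall g, g = (fun _ _ : R => 0) -> Cn n M g) by
        (intros g ->; clear IH; induction n as [|n IH]; [intros u v _; apply continuous_const|];
         split; [intros u v _; apply continuous_const|split; [intros; split; apply ex_derive_const|]];
         unfold pu, pv; split; (eapply eq_ind; [exact IH| ]);
         apply functional_extensionality; intro; apply functional_extensionality; intro;
         symmetry; apply Derive_const).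
      split; apply E; unfold pu, pv;
      apply functional_extensionality; intro; apply functional_extensionality; intro; apply Derive_const.
Qed.
Section Alg.
Variable M : R * R -> Prop.
Hypothesis HM : open M.

Lemma C0_plus f g : C0 M f -> C0 M g -> C0 M (fun u v => f u v + g u v).
Proof. intros Hf Hg u v H. apply (continuous_plus (fun p : R*R => f (fst p) (snd p)) (fun p : R*R => g (fst p) (snd p))); auto. Qed.
Lemma C0_mult f g : C0 M f -> C0 M g -> C0 M (fun u v => f u v * g u v).
Proof. intros Hf Hg u v H. apply (continuous_mult (fun p : R*R => f (fst p) (snd p)) (fun p : R*R => g (fst p) (snd p))); auto. Qed.

Lemma Cn_plus n : forall f g, Cn n M f -> Cn n M g -> Cn n M (fun u v => f u v + g u v).
Proof.
  induction n as [|n IH]; intros f g Hf Hg.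
  - now apply C0_plus.
  - destruct Hf as [F0 [F1 [F2 F3]]], Hg as [G0 [G1 [G2 G3]]].
    split; [now apply C0_plus|split; [|split]].
    + intros u v H. destruct (F1 u v H), (G1 u v H).
      split; apply (ex_derive_plus (K:=R_AbsRing) (V:=R_NormedModule)); auto.
    + apply (Cn_ext_loc M HM n (fun u v => pu f u v + pu g u v)); [|now apply IH].
      intros u v H. destruct (F1 u v H), (G1 u v H). unfold pu.
      symmetry. apply (Derive_plus (fun t => f t v) (fun t => g t v)); auto.
    + apply (Cn_ext_loc M HM n (fun u v => pv f u v + pv g u v)); [|now apply IH].
      intros u v H. destruct (F1 u v H), (G1 u v H). unfold pv.
      symmetry. apply (Derive_plus (fun t => f u t) (fun t => g u t)); auto.
Qed.

Lemma Cn_mult n : forall f g, Cn n M f -> Cn n M g -> Cn n M (fun u v => f u v * g u v).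
Proof.
  induction n as [|n IH]; intros f g Hf Hg.
  - now apply C0_mult.
  - pose proof (Cn_S _ _ _ Hf) as Hf'. pose proof (Cn_S _ _ _ Hg) as Hg'.
    destruct Hf as [F0 [F1 [F2 F3]]], Hg as [G0 [G1 [G2 G3]]].
    split; [now apply C0_mult|split; [|split]].
    + intros u v H. destruct (F1 u v H), (G1 u v H).
      split; apply ex_derive_mult; auto.
    + apply (Cn_ext_loc M HM n (fun u v => pu f u v * g u v + f u v * pu g u v)).
      * intros u v H. destruct (F1 u v H), (G1 u v H). unfold pu.
        symmetry. apply (Derive_mult (fun t => f t v) (fun t => g t v)); auto.
      * apply Cn_plus; apply IH; auto.
    + apply (Cn_ext_loc M HM n (fun u v => pv f u v * g u v + f u v * pv g u v)).
      * intros u v H. destruct (F1 u v H), (G1 u v H). unfold pv.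
        symmetry. apply (Derive_mult (fun t => f u t) (fun t => g u t)); auto.
      * apply Cn_plus; apply IH; auto.
Qed.

Lemma sm_plus f g : smooth_on M f -> smooth_on M g -> smooth_on M (fun u v => f u v + g u v).
Proof. intros A B n. apply Cn_plus; auto. Qed.
Lemma sm_mult f g : smooth_on M f -> smooth_on M g -> smooth_on M (fun u v => f u v * g u v).
Proof. intros A B n. apply Cn_mult; auto. Qed.
Lemma sm_const c : smooth_on M (fun _ _ => c).
Proof. intros n. apply Cn_const. Qed.
Lemma sm_opp f : smooth_on M f -> smooth_on M (fun u v => - f u v).
Proof.
  intros A. apply (smooth_ext_loc M HM (fun u v => (-1) * f u v)); [intros; ring|].
  apply sm_mult; [apply sm_const|exact A].
Qed.

Lemma smat_mul A B : smooth_mat_on M A -> smooth_mat_on M B ->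
  smooth_mat_on M (fun u v => mmul (A u v) (B u v)).
Proof.
  intros (A1&A2&A3&A4) (B1&B2&B3&B4); unfold mmul; simpl.
  repeat split; apply sm_plus; apply sm_mult; assumption.
Qed.
Lemma smat_tr A : smooth_mat_on M A -> smooth_mat_on M (fun u v => mtr (A u v)).
Proof. intros (A1&A2&A3&A4); unfold mtr; simpl; repeat split; assumption. Qed.
Lemma smat_const c : smooth_mat_on M (fun _ _ => c).
Proof. repeat split; apply sm_const. Qed.
End Alg.
Lemma D2 (f1 g1 f2 g2 : R -> R) x :
  ex_derive f1 x -> ex_derive g1 x -> ex_derive f2 x -> ex_derive g2 x ->
  Derive (fun t => f1 t * g1 t + f2 t * g2 t) x =
  (Derive f1 x * g1 x + f1 x * Derive g1 x) + (Derive f2 x * g2 x + f2 x * Derive g2 x).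
Proof.
  intros. rewrite (Derive_plus (fun t => f1 t * g1 t) (fun t => f2 t * g2 t));
  try (apply ex_derive_mult; auto).
  rewrite !Derive_mult; auto.
Qed.

Definition dU (A : R -> R -> mat2) u v :=
  ex_derive (fun t => m11 (A t v)) u /\ ex_derive (fun t => m12 (A t v)) u /\
  ex_derive (fun t => m21 (A t v)) u /\ ex_derive (fun t => m22 (A t v)) u.
Definition dV (A : R -> R -> mat2) u v :=
  ex_derive (fun t => m11 (A u t)) v /\ ex_derive (fun t => m12 (A u t)) v /\
  ex_derive (fun t => m21 (A u t)) v /\ ex_derive (fun t => m22 (A u t)) v.

Lemma mpu_mul A B u v : dU A u v -> dU B u v ->
  mpu (fun a b => mmul (A a b) (B a b)) u v = madd (mmul (mpu A u v) (B u v)) (mmul (A u v) (mpu B u v)).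
Proof.
  intros (a1&a2&a3&a4) (b1&b2&b3&b4). unfold mpu, pu, mmul, madd; simpl.
  f_equal; rewrite D2; auto; ring.
Qed.
Lemma mpv_mul A B u v : dV A u v -> dV B u v ->
  mpv (fun a b => mmul (A a b) (B a b)) u v = madd (mmul (mpv A u v) (B u v)) (mmul (A u v) (mpv B u v)).
Proof.
  intros (a1&a2&a3&a4) (b1&b2&b3&b4). unfold mpv, pv, mmul, madd; simpl.
  f_equal; rewrite D2; auto; ring.
Qed.

Lemma sm_dU M f u v : smooth_on M f -> M (u, v) -> ex_derive (fun t => f t v) u /\ ex_derive (fun t => f u t) v.
Proof. intros Hf H. destruct (Hf 1%nat) as [_ [H1 _]]. now apply H1. Qed.

Lemma smat_dU M A u v : smooth_mat_on M A -> M (u, v) -> dU A u v /\ dV A u v.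
Proof.
  intros (A1&A2&A3&A4) H.
  destruct (sm_dU _ _ _ _ A1 H), (sm_dU _ _ _ _ A2 H), (sm_dU _ _ _ _ A3 H), (sm_dU _ _ _ _ A4 H).
  unfold dU, dV; tauto.
Qed.

Lemma dU_mul A B u v : dU A u v -> dU B u v -> dU (fun a b => mmul (A a b) (B a b)) u v.
Proof.
  intros (a1&a2&a3&a4) (b1&b2&b3&b4); unfold dU, mmul; simpl.
  repeat split; apply (ex_derive_plus (K:=R_AbsRing) (V:=R_NormedModule)); apply ex_derive_mult; auto.
Qed.
Lemma dV_mul A B u v : dV A u v -> dV B u v -> dV (fun a b => mmul (A a b) (B a b)) u v.
Proof.
  intros (a1&a2&a3&a4) (b1&b2&b3&b4); unfold dV, mmul; simpl.
  repeat split; apply (ex_derive_plus (K:=R_AbsRing) (V:=R_NormedModule)); apply ex_derive_mult; auto.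
Qed.
Lemma dV_tr A u v : dV A u v -> dV (fun a b => mtr (A a b)) u v.
Proof. unfold dV, mtr; simpl; tauto. Qed.
Lemma dU_tr A u v : dU A u v -> dU (fun a b => mtr (A a b)) u v.
Proof. unfold dU, mtr; simpl; tauto. Qed.
Lemma mpu_tr A u v : mpu (fun a b => mtr (A a b)) u v = mtr (mpu A u v).
Proof. reflexivity. Qed.
Lemma mpv_tr A u v : mpv (fun a b => mtr (A a b)) u v = mtr (mpv A u v).
Proof. reflexivity. Qed.

Definition I2 := M2 1 0 0 1.
Lemma inner_inv P S X Y :
  inner (mmul (mmul P X) (mtr S)) (mmul (mmul P Y) (mtr S)) = mdet P * mdet S * inner X Y.
Proof. destruct P, S, X, Y; unfold inner, mmul, mtr, mdet, mtrace; simpl; field. Qed.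
Lemma cancel_zero P S X : mdet P = 1 -> mdet S = 1 -> mmul (mmul P X) (mtr S) = mzero -> X = mzero.
Proof.
  destruct P as [p1 p2 p3 p4], S as [s1 s2 s3 s4], X as [x1 x2 x3 x4].
  unfold mmul, mtr, mdet, mzero; simpl. intros HP HS E. injection E; intros e4 e3 e2 e1.
  assert (K : forall a b c d : R, a*d - b*c = 1 -> forall y1 y3 : R,
     (a*y1 + b*y3 = 0 -> c*y1+d*y3 = 0 -> y1 = 0 /\ y3 = 0)).
  { intros a b c d Hd y1 y3 E1 E2. split.
    - replace y1 with (d*(a*y1+b*y3) - b*(c*y1+d*y3)) by (rewrite <- (Rmult_1_r y1) at 3; rewrite <- Hd; ring).
      rewrite E1, E2; ring.
    - replace y3 with (a*(c*y1+d*y3) - c*(a*y1+b*y3)) by (rewrite <- (Rmult_1_r y3) at 3; rewrite <- Hd; ring).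
      rewrite E1, E2; ring. }
  destruct (K p1 p2 p3 p4 HP (x1*s1 + x2*s2) (x3*s1+x4*s2)) as [Z1 Z3];
    [rewrite <- e1; ring | rewrite <- e3; ring |].
  destruct (K p1 p2 p3 p4 HP (x1*s3 + x2*s4) (x3*s3+x4*s4)) as [Z2 Z4];
    [rewrite <- e2; ring | rewrite <- e4; ring |].
  destruct (K s1 s2 s3 s4 ltac:(lra) x1 x2) as [X1 X2]; [lra|lra|].
  destruct (K s1 s2 s3 s4 ltac:(lra) x3 x4) as [X3 X4]; [lra|lra|].
  subst; reflexivity.
Qed.
Lemma mmul_I P S : mmul P (mtr S) = mmul (mmul P I2) (mtr S).
Proof. destruct P, S; unfold mmul, I2, mtr; simpl; f_equal; ring. Qed.
Lemma Dexp_half (f : R -> R) x : ex_derive f x ->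
  ex_derive (fun t => exp (f t / 2)) x /\ Derive (fun t => exp (f t / 2)) x = exp (f x / 2) * (Derive f x / 2).
Proof.
  intros Hf.
  assert (Hg : ex_derive (fun t : R => f t / 2) x).
  { apply (ex_derive_ext (fun t => /2 * f t)); [intros t; unfold Rdiv; apply Rmult_comm|now apply ex_derive_scal]. }
  assert (He : forall y, ex_derive exp y) by (intros y; eexists; apply is_derive_exp).
  split.
  - apply (ex_derive_comp exp (fun t => f t / 2)); auto.
  - rewrite (Derive_comp exp (fun t => f t / 2)); auto.
    rewrite (is_derive_unique exp _ _ (is_derive_exp _)).
    rewrite (Derive_ext (fun t => f t / 2) (fun t => /2 * f t)) by (intros; unfold Rdiv; ring).
    rewrite Derive_scal. unfold Rdiv; ring.
Qed.

Definition A0 (om : R -> R -> R) u v := M2 0 (exp (om u v / 2)) 0 0.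
Definition B0 (om : R -> R -> R) u v := M2 0 0 (exp (om u v / 2)) 0.

Lemma alg_u om Q H u v P S :
  madd (mmul (mmul P (U1 om Q H u v)) (mtr S)) (mmul P (mtr (mmul S (U2 om Q H u v))))
  = mmul (mmul P (A0 om u v)) (mtr S).
Proof. destruct P, S; unfold U1, U2, A0, madd, mmul, mtr; simpl; f_equal; field. Qed.
Lemma alg_v om Rr H u v P S :
  madd (mmul (mmul P (V1 om Rr H u v)) (mtr S)) (mmul P (mtr (mmul S (V2 om Rr H u v))))
  = mmul (mmul P (B0 om u v)) (mtr S).
Proof. destruct P, S; unfold V1, V2, B0, madd, mmul, mtr; simpl; f_equal; field. Qed.

Lemma alg_uv om Rr H u v P S :
  madd (mmul (madd (mmul (mmul P (V1 om Rr H u v)) (A0 om u v))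
                   (mmul P (M2 0 (exp (om u v / 2) * (pv om u v / 2)) 0 0))) (mtr S))
       (mmul (mmul P (A0 om u v)) (mtr (mmul S (V2 om Rr H u v))))
  = mmul (mmul P (madd (madd (mmul (V1 om Rr H u v) (A0 om u v))
        (M2 0 (exp (om u v / 2) * (pv om u v / 2)) 0 0)) (mmul (A0 om u v) (mtr (V2 om Rr H u v))))) (mtr S).
Proof. destruct P, S; unfold V1, V2, A0, madd, mmul, mtr; simpl; f_equal; ring. Qed.
Lemma A0_dV M om u v : smooth_on M om -> M (u, v) -> dV (A0 om) u v /\
  mpv (A0 om) u v = M2 0 (exp (om u v / 2) * (pv om u v / 2)) 0 0.
Proof.
  intros Hom H. destruct (sm_dU _ _ _ _ Hom H) as [_ Dv].
  destruct (Dexp_half (fun t => om u t) v Dv) as [E1 E2].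
  split.
  - unfold dV, A0; simpl. repeat split; try apply ex_derive_const. exact E1.
  - unfold mpv, pv, A0; simpl. rewrite !Derive_const. f_equal. exact E2.
Qed.

Lemma part1 (M : R * R -> Prop) (om Q Rr : R -> R -> R) (H : R) :
  open M -> smooth_on M om ->
  forall Phi1 Phi2 : R -> R -> mat2,
     smooth_mat_on M Phi1 -> smooth_mat_on M Phi2 ->
     into_SL2 M Phi1 -> into_SL2 M Phi2 ->
     (forall u v, M (u, v) ->
        mpu Phi1 u v = mmul (Phi1 u v) (U1 om Q H u v) /\
        mpv Phi1 u v = mmul (Phi1 u v) (V1 om Rr H u v) /\
        mpu Phi2 u v = mmul (Phi2 u v) (U2 om Q H u v) /\
        mpv Phi2 u v = mmul (Phi2 u v) (V2 om Rr H u v)) ->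
     conformal_timelike_CMC_immersion M
       (fun u v => mmul (Phi1 u v) (mtr (Phi2 u v))) om H
       (fun u v => mmul (mmul (Phi1 u v) kprime) (mtr (Phi2 u v))).
Proof.
  intros HM Hom P S SP SS DP DS Eq.
  assert (Hu : forall u v, M (u, v) ->
     mpu (fun u v => mmul (P u v) (mtr (S u v))) u v = mmul (mmul (P u v) (A0 om u v)) (mtr (S u v))).
  { intros u v Huv. destruct (smat_dU _ _ _ _ SP Huv) as [PU _]. destruct (smat_dU _ _ _ _ SS Huv) as [SU _].
    rewrite (mpu_mul P (fun a b => mtr (S a b))); [|exact PU|now apply dU_tr].
    rewrite mpu_tr. destruct (Eq u v Huv) as (e1&e2&e3&e4). rewrite e1, e3. apply alg_u. }
  assert (Hv : forall u v, M (u, v) ->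
     mpv (fun u v => mmul (P u v) (mtr (S u v))) u v = mmul (mmul (P u v) (B0 om u v)) (mtr (S u v))).
  { intros u v Huv. destruct (smat_dU _ _ _ _ SP Huv) as [_ PV]. destruct (smat_dU _ _ _ _ SS Huv) as [_ SV].
    rewrite (mpv_mul P (fun a b => mtr (S a b))); [|exact PV|now apply dV_tr].
    rewrite mpv_tr. destruct (Eq u v Huv) as (e1&e2&e3&e4). rewrite e2, e4. apply alg_v. }
  split; [apply smat_mul; auto; apply smat_tr; auto|].
  split; [apply smat_mul; [auto| apply smat_mul; auto; apply smat_const|apply smat_tr; auto]|].
  intros u v Huv. cbv zeta. rewrite (Hu u v Huv), (Hv u v Huv).
  assert (dP : mdet (P u v) = 1) by now apply DP.
  assert (dS : mdet (S u v) = 1) by now apply DS.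
  assert (ee : exp (om u v / 2) * exp (om u v / 2) = exp (om u v)).
  { rewrite <- exp_plus. f_equal. field. }
  rewrite (mmul_I (P u v) (S u v)).
  rewrite !inner_inv, dP, dS.
  split; [unfold inner, I2, mmul, mtrace; simpl; field|].
  split.
  { intros a b E.
    assert (E' : mmul (mmul (P u v) (madd (mscal a (A0 om u v)) (mscal b (B0 om u v)))) (mtr (S u v)) = mzero).
    { rewrite <- E. destruct (P u v), (S u v). unfold A0, B0, madd, mscal, mmul, mtr; simpl. f_equal; ring. }
    apply cancel_zero in E'; auto. unfold A0, B0, madd, mscal, mzero in E'. simpl in E'.
    injection E'. intros _ e3 e2 _. pose proof (exp_pos (om u v / 2)).
    split; nra. }
  split; [unfold inner, A0, mmul, mtrace; simpl; field|].
  split; [unfold inner, B0, mmul, mtrace; simpl; field|].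
  split; [unfold inner, A0, B0, mmul, mtrace; simpl; rewrite <- ee; field|].
  split; [unfold inner, kprime, mmul, mtrace; simpl; field|].
  split; [unfold inner, kprime, I2, mmul, mtrace; simpl; field|].
  split; [unfold inner, kprime, A0, mmul, mtrace; simpl; field|].
  split; [unfold inner, kprime, B0, mmul, mtrace; simpl; field|].
  rewrite (mpv_ext_loc M HM _ (fun a b => mmul (mmul (P a b) (A0 om a b)) (mtr (S a b))) u v); [|exact Hu|exact Huv].
  destruct (smat_dU _ _ _ _ SP Huv) as [_ PV]. destruct (smat_dU _ _ _ _ SS Huv) as [_ SV].
  destruct (A0_dV M om u v Hom Huv) as [AV AE].
  rewrite (mpv_mul (fun a b => mmul (P a b) (A0 om a b)) (fun a b => mtr (S a b))); [| now apply dV_mul | now apply dV_tr].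
  rewrite (mpv_mul P (A0 om)); auto. rewrite mpv_tr, AE.
  destruct (Eq u v Huv) as (e1&e2&e3&e4). rewrite e2, e4.
  rewrite alg_uv, inner_inv, dP, dS.
  unfold inner, kprime, V1, V2, A0, madd, mmul, mtr, mtrace; simpl.
  rewrite exp_Ropp, <- ee. pose proof (exp_pos (om u v / 2)).
  field. lra.
Qed.
Definition cof (a : mat2) := M2 (m22 a) (- m21 a) (- m12 a) (m11 a).

Lemma mpu_cof F u v : mpu (fun a b => cof (F a b)) u v = cof (mpu F u v).
Proof. unfold mpu, pu, cof; simpl. f_equal; apply Derive_opp. Qed.
Lemma mpv_cof F u v : mpv (fun a b => cof (F a b)) u v = cof (mpv F u v).
Proof. unfold mpv, pv, cof; simpl. f_equal; apply Derive_opp. Qed.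

Lemma cof_U om Q H u v X : cof (mmul X (U2' om Q H u v)) = mmul (cof X) (U2 om Q H u v).
Proof. destruct X; unfold cof, U2, U2', mmul; simpl; f_equal; ring. Qed.
Lemma cof_V om Rr H u v X : cof (mmul X (V2' om Rr H u v)) = mmul (cof X) (V2 om Rr H u v).
Proof. destruct X; unfold cof, V2, V2', mmul; simpl; f_equal; ring. Qed.

Lemma cof_inv a : mdet a = 1 -> mtr (minv a) = cof a.
Proof. intros E. unfold minv, mtr, cof. rewrite E. simpl. f_equal; field. Qed.
Lemma mtr_mtr a : mtr (mtr a) = a.
Proof. destruct a; reflexivity. Qed.

Theorem theorem5p1 (M : R * R -> Prop) (om Q Rr : R -> R -> R) (H : R) :
  simply_connected_domain M ->
  smooth_on M om -> smooth_on M Q -> smooth_on M Rr ->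
  (forall Phi1 Phi2 : R -> R -> mat2,
     smooth_mat_on M Phi1 -> smooth_mat_on M Phi2 ->
     into_SL2 M Phi1 -> into_SL2 M Phi2 ->
     (forall u v, M (u, v) ->
        mpu Phi1 u v = mmul (Phi1 u v) (U1 om Q H u v) /\
        mpv Phi1 u v = mmul (Phi1 u v) (V1 om Rr H u v) /\
        mpu Phi2 u v = mmul (Phi2 u v) (U2 om Q H u v) /\
        mpv Phi2 u v = mmul (Phi2 u v) (V2 om Rr H u v)) ->
     conformal_timelike_CMC_immersion M
       (fun u v => mmul (Phi1 u v) (mtr (Phi2 u v))) om H
       (fun u v => mmul (mmul (Phi1 u v) kprime) (mtr (Phi2 u v)))) /\
  (forall Psi1 Psi2 : R -> R -> mat2,
     smooth_mat_on M Psi1 -> smooth_mat_on M Psi2 ->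
     into_SL2 M Psi1 -> into_SL2 M Psi2 ->
     (forall u v, M (u, v) ->
        mpu Psi1 u v = mmul (Psi1 u v) (U1 om Q H u v) /\
        mpv Psi1 u v = mmul (Psi1 u v) (V1 om Rr H u v) /\
        mpu Psi2 u v = mmul (Psi2 u v) (U2' om Q H u v) /\
        mpv Psi2 u v = mmul (Psi2 u v) (V2' om Rr H u v)) ->
     conformal_timelike_CMC_immersion M
       (fun u v => mmul (Psi1 u v) (minv (Psi2 u v))) om H
       (fun u v => mmul (mmul (Psi1 u v) kprime) (minv (Psi2 u v)))).
Proof.
  intros [HM _] Hom _ _. split; [now apply part1|].
  intros P S SP SS DP DS Eq.
  set (T := fun u v => mtr (minv (S u v))).
  assert (TC : forall u v, M (u, v) -> T u v = cof (S u v)) by (intros; apply cof_inv, DS; auto).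
  assert (HT := part1 M om Q Rr H HM Hom P T SP).
  replace (fun u v => mmul (P u v) (minv (S u v))) with (fun u v => mmul (P u v) (mtr (T u v)))
    by (apply functional_extensionality; intro; apply functional_extensionality; intro; unfold T; now rewrite mtr_mtr).
  replace (fun u v => mmul (mmul (P u v) kprime) (minv (S u v))) with (fun u v => mmul (mmul (P u v) kprime) (mtr (T u v)))
    by (apply functional_extensionality; intro; apply functional_extensionality; intro; unfold T; now rewrite mtr_mtr).
  apply HT; auto.
  - destruct SS as (S1&S2&S3&S4).
    repeat split; (eapply smooth_ext_loc; [exact HM| |]);
      [intros u v Huv; rewrite (TC u v Huv); reflexivity| |
       intros u v Huv; rewrite (TC u v Huv); reflexivity| |
       intros u v Huv; rewrite (TC u v Huv); reflexivity| |
       intros u v Huv; rewrite (TC u v Huv); reflexivity| ];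
      unfold cof; simpl; try apply sm_opp; auto.
  - intros u v Huv. rewrite (TC u v Huv). pose proof (DS u v Huv). unfold mdet, cof in *; simpl. lra.
  - intros u v Huv. destruct (Eq u v Huv) as (e1&e2&e3&e4). split; [exact e1|split; [exact e2|]].
    rewrite (mpu_ext_loc M HM T (fun a b => cof (S a b)) u v TC Huv).
    rewrite (mpv_ext_loc M HM T (fun a b => cof (S a b)) u v TC Huv).
    rewrite mpu_cof, mpv_cof, e3, e4, cof_U, cof_V, (TC u v Huv). split; reflexivity.
Qed.
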